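(* Let $0<a<b$. The infinite server problem on the real line with source $0$ is competitive if and only if the infinite server problem on $(\{0\}\cup[a,b],0)$ (the subspace $\{0\}\cup[a,b]$ of the real line with source $0$) is competitive.
   Context: Infinite server problem on $(M,s)$: $M$ is a metric space and $s\in M$ the source; an unbounded number of servers initially reside at $s$. A finite sequence of requests (points of $M$) is revealed one by one; each must be served immediately, without knowledge of future requests, by moving some server to it; the cost is the total distance traveled. The problem is competitive if there is a deterministic online algorithm and constants $\rho,c$ with $ALG(\sigma)\le\rho\,OPT(\sigma)+c$ for all request sequences $\sigma$. *)

(* Defs.v *)
From Stdlib Require Import Reals List Arith.
From Coquelicot Require Import Rbar Lub.
Open Scope R_scope.

(* We work with metric subspaces X of the real line (distance |x - y|),
   given by a predicate X : R -> Prop, with a source s. *)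

Definition config := nat -> R.
Definition init_config (s : R) : config := fun _ => s.
Definition move (c : config) (i : nat) (r : R) : config :=
  fun j => if Nat.eqb j i then r else c j.

(* A (deterministic) server-choice rule: given the past requests (oldest first)
   and the current request, return the index of the server sent to the request.
   Deterministic online algorithms are exactly such rules (they only see the
   past and the current request); an offline solution for a fixed sequence is
   also such a rule (the history determines the position in the sequence). *)
Definition rule := list R -> R -> nat.

Fixpoint run_cost (A : rule) (hist : list R) (c : config) (sigma : list R) : R :=
  match sigma with
  | nil => 0
  | r :: sigma' =>
      let i := A hist r in
      Rabs (c i - r) + run_cost A (hist ++ r :: nil) (move c i r) sigma'
  end.

Definition ALG (A : rule) (s : R) (sigma : list R) : R :=
  run_cost A nil (init_config s) sigma.

Definition OPT (s : R) (sigma : list R) : R :=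
  real (Glb_Rbar (fun x => exists A : rule, x = ALG A s sigma)).

Definition competitive (X : R -> Prop) (s : R) : Prop :=
  exists (A : rule) (rho c : R),
    forall sigma : list R, Forall X sigma ->
      ALG A s sigma <= rho * OPT s sigma + c.

(* Main.v *)
Require Import Defs.
From Stdlib Require Import Reals.
From Stdlib Require Import Lra Lia List Arith ZArith Cantor.
From Coquelicot Require Import Rbar Lub.
Open Scope R_scope.

Fixpoint costL (c : config) (ls : list (R * nat)) : R :=
  match ls with
  | nil => 0
  | (x, l) :: t => Rabs (c l - x) + costL (move c l x) t
  end.

Fixpoint labels (A : rule) (hist : list R) (sigma : list R) : list (R * nat) :=
  match sigma with
  | nil => nil
  | r :: t => (r, A hist r) :: labels A (hist ++ r :: nil) t
  end.

Lemma run_cost_labels A hist c sigma :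
  run_cost A hist c sigma = costL c (labels A hist sigma).
Proof.
  revert hist c; induction sigma as [|r t IH]; intros hist c; simpl; auto.
  rewrite IH; reflexivity.
Qed.

Lemma labels_fst A hist sigma : map fst (labels A hist sigma) = sigma.
Proof.
  revert hist; induction sigma as [|r t IH]; intros hist; simpl; auto.
  rewrite IH; reflexivity.
Qed.

Lemma move_eq c i r : move c i r i = r.
Proof. unfold move; rewrite Nat.eqb_refl; auto. Qed.

Lemma move_neq c i r j : j <> i -> move c i r j = c j.
Proof. intros H; unfold move; apply Nat.eqb_neq in H; rewrite H; auto. Qed.

Lemma costL_ext ls : forall c d,
  (forall p, In p ls -> c (snd p) = d (snd p)) -> costL c ls = costL d ls.
Proof.
  induction ls as [|[x l] t IH]; intros c d H; simpl; auto.
  replace (c l) with (d l) by (symmetry; apply (H (x,l)); left; auto).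
  f_equal. apply IH. intros [y l'] Hin; simpl.
  destruct (Nat.eq_dec l' l) as [->|Hne].
  - rewrite !move_eq; auto.
  - rewrite !move_neq by auto. apply (H (y,l')). right; auto.
Qed.

Lemma costL_ge0 ls : forall c, 0 <= costL c ls.
Proof.
  induction ls as [|[x l] t IH]; intros c; simpl; [lra|].
  pose proof (Rabs_pos (c l - x)); pose proof (IH (move c l x)); lra.
Qed.

Definition rule_of (L : list (R * nat)) : rule :=
  fun h _ => snd (nth (length h) L (0, 0%nat)).

Lemma rule_of_labels L : forall suf pre hist,
  L = pre ++ suf -> length hist = length pre ->
  labels (rule_of L) hist (map fst suf) = suf.
Proof.
  induction suf as [|[x l] t IH]; intros pre hist HL Hlen; simpl; auto.
  f_equal.
  - unfold rule_of. rewrite Hlen, HL. rewrite nth_middle. reflexivity.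
  - apply (IH (pre ++ (x,l) :: nil)).
    + rewrite HL, <- app_assoc; reflexivity.
    + rewrite !length_app; simpl; lia.
Qed.

Lemma ALG_rule_of s L : ALG (rule_of L) s (map fst L) = costL (init_config s) L.
Proof.
  unfold ALG; rewrite run_cost_labels.
  rewrite (rule_of_labels L L nil nil); auto.
Qed.

Lemma ALG_ge0 A s sigma : 0 <= ALG A s sigma.
Proof. unfold ALG; rewrite run_cost_labels; apply costL_ge0. Qed.

Lemma OPT_le s sigma A : OPT s sigma <= ALG A s sigma.
Proof.
  unfold OPT.
  destruct (Glb_Rbar_correct (fun x => exists A : rule, x = ALG A s sigma)) as [Hlb Hg].
  assert (H1 := Hlb (ALG A s sigma) (ex_intro _ A eq_refl)).
  assert (H2 : Rbar_le (Finite 0) (Glb_Rbar (fun x => exists A : rule, x = ALG A s sigma))).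
  { apply Hg. intros x [B ->]. simpl. apply ALG_ge0. }
  destruct (Glb_Rbar _); simpl in *; tauto.
Qed.

Lemma OPT_ge s sigma m : (forall A, m <= ALG A s sigma) -> m <= OPT s sigma.
Proof.
  intros Hm. unfold OPT.
  destruct (Glb_Rbar_correct (fun x => exists A : rule, x = ALG A s sigma)) as [Hlb Hg].
  assert (H1 := Hlb (ALG (fun _ _ => 0%nat) s sigma) (ex_intro _ _ eq_refl)).
  assert (H2 : Rbar_le (Finite m) (Glb_Rbar (fun x => exists A : rule, x = ALG A s sigma))).
  { apply Hg. intros x [B ->]. simpl. apply Hm. }
  destruct (Glb_Rbar _); simpl in *; tauto.
Qed.

Lemma OPT_le_costL s L : OPT s (map fst L) <= costL (init_config s) L.
Proof. rewrite <- ALG_rule_of. apply OPT_le. Qed.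

Lemma OPT_ge_costL s sigma m :
  (forall L, map fst L = sigma -> m <= costL (init_config s) L) -> m <= OPT s sigma.
Proof.
  intros H. apply OPT_ge. intros A. unfold ALG. rewrite run_cost_labels.
  apply H. apply labels_fst.
Qed.

Lemma OPT_ge0 s sigma : 0 <= OPT s sigma.
Proof. apply OPT_ge. intros A; apply ALG_ge0. Qed.

Lemma reach ls : forall c M, (forall j, Rabs (c j) <= M) ->
  forall x, In x (map fst ls) -> Rabs x <= M + costL c ls.
Proof.
  induction ls as [|[y l] t IH]; intros c M Hc x Hx; simpl in *; [tauto|].
  assert (Hy : Rabs y <= M + Rabs (c l - y)).
  { pose proof (Rabs_triang (c l) (y - c l)).
    replace (c l + (y - c l)) with y in H by ring.
    rewrite Rabs_minus_sym in H. pose proof (Hc l); lra. }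
  destruct Hx as [<-|Hx].
  - pose proof (costL_ge0 t (move c l y)); lra.
  - assert (Hc' : forall j, Rabs (move c l y j) <= M + Rabs (c l - y)).
    { intros j; destruct (Nat.eq_dec j l) as [->|Hne].
      - rewrite move_eq; auto.
      - rewrite move_neq by auto. pose proof (Hc j); pose proof (Rabs_pos (c l - y)); lra. }
    pose proof (IH _ _ Hc' x Hx); lra.
Qed.

Lemma OPT_ge_elem sigma x : In x sigma -> Rabs x <= OPT 0 sigma.
Proof.
  intros Hx. apply OPT_ge_costL. intros L HL.
  assert (H := reach L (init_config 0) 0). 
  rewrite Rplus_0_l in H. apply H.
  - intros j; unfold init_config; rewrite Rabs_R0; lra.
  - rewrite HL; auto.
Qed.

Definition scaleP (mu : R) (p : R * nat) : R * nat := (mu * fst p, snd p).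

Lemma costL_scale mu ls : forall c d, (forall j, d j = mu * c j) ->
  costL d (map (scaleP mu) ls) = Rabs mu * costL c ls.
Proof.
  induction ls as [|[x l] t IH]; intros c d Hd; simpl; [ring|].
  rewrite (IH (move c l x) (move d l (mu * x))).
  - rewrite Hd. replace (mu * c l - mu * x) with (mu * (c l - x)) by ring.
    rewrite Rabs_mult; ring.
  - intros j; destruct (Nat.eq_dec j l) as [->|Hne].
    + rewrite !move_eq; auto.
    + rewrite !move_neq by auto; auto.
Qed.

Definition relab (g : nat -> nat) (p : R * nat) : R * nat := (fst p, g (snd p)).

Lemma costL_relab g ls : (forall i j, g i = g j -> i = j) ->
  forall c d, (forall j, c (g j) = d j) ->
  costL c (map (relab g) ls) = costL d ls.
Proof.
  intros Hg. induction ls as [|[x l] t IH]; intros c d Hcd; simpl; auto.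
  rewrite Hcd. f_equal. apply IH.
  intros j; destruct (Nat.eq_dec j l) as [->|Hne].
  - rewrite !move_eq; auto.
  - rewrite (move_neq d) by auto. rewrite move_neq; [auto|]. intros E; apply Hne, Hg; auto.
Qed.

Lemma Psplit (P : R -> bool) ls : 
  (forall p q, In p ls -> In q ls -> snd p = snd q -> P (fst p) = P (fst q)) ->
  forall c, costL c ls = costL c (filter (fun p => P (fst p)) ls)
                       + costL c (filter (fun p => negb (P (fst p))) ls).
Proof.
  induction ls as [|[x l] t IH]; intros Hs c; simpl; [ring|].
  assert (Hs' : forall p q, In p t -> In q t -> snd p = snd q -> P (fst p) = P (fst q)).
  { intros p q Hp Hq; apply Hs; right; auto. }
  assert (Hl : forall p, In p t -> snd p = l -> P (fst p) = P x).
  { intros p Hp Hpl. apply (Hs p (x,l)); simpl; auto. }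
  destruct (P x) eqn:HP; simpl.
  - rewrite (IH Hs' (move c l x)).
    rewrite (costL_ext (filter (fun p => negb (P (fst p))) t) (move c l x) c); [ring|].
    intros [y l'] Hin. apply filter_In in Hin as [Hin Hn]. simpl in *.
    rewrite move_neq; auto. intros ->. pose proof (Hl (y,l) Hin eq_refl) as E; simpl in E. rewrite E in Hn; discriminate.
  - rewrite (IH Hs' (move c l x)).
    rewrite (costL_ext (filter (fun p => P (fst p)) t) (move c l x) c); [ring|].
    intros [y l'] Hin. apply filter_In in Hin as [Hin Hn]. simpl in *.
    rewrite move_neq; auto. intros ->. pose proof (Hl (y,l) Hin eq_refl) as E; simpl in E. rewrite E in Hn; discriminate.
Qed.

Definition sumL (f : nat -> R) (K : list nat) : R := fold_right (fun k acc => f k + acc) 0 K.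

Lemma sumL_le f g K : (forall k, In k K -> f k <= g k) -> sumL f K <= sumL g K.
Proof.
  induction K as [|k K IH]; intros H; simpl; [lra|].
  pose proof (H k (or_introl eq_refl)). assert (sumL f K <= sumL g K) by (apply IH; intros; apply H; right; auto).
  lra.
Qed.

Lemma sumL_scal a f K : sumL (fun k => a * f k) K = a * sumL f K.
Proof. induction K as [|k K IH]; simpl; [ring|]. rewrite IH; ring. Qed.

Lemma sumL_ext f g K : (forall k, In k K -> f k = g k) -> sumL f K = sumL g K.
Proof.
  induction K as [|k K IH]; intros H; simpl; auto.
  rewrite H by (left; auto). rewrite IH; auto. intros; apply H; right; auto.
Qed.

Section Classes.
Variable code : R -> nat.

Definition labsep (ls : list (R * nat)) :=
  forall p q, In p ls -> In q ls -> snd p = snd q -> code (fst p) = code (fst q).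

Definition clsf (k : nat) := fun p : R * nat => Nat.eqb (code (fst p)) k.

Lemma filter_nested k k0 ls : k <> k0 ->
  filter (clsf k) (filter (fun p => negb (code (fst p) =? k0)%nat) ls) = filter (clsf k) ls.
Proof.
  intros Hk. unfold clsf. induction ls as [|p ls IHl]; simpl; auto.
  destruct (Nat.eqb_spec (code (fst p)) k0) as [E|E]; simpl;
  destruct (Nat.eqb_spec (code (fst p)) k); try congruence.
Qed.

Lemma class_split K : forall ls c, NoDup K -> (forall p, In p ls -> In (code (fst p)) K) ->
  labsep ls -> costL c ls = sumL (fun k => costL c (filter (clsf k) ls)) K.
Proof.
  induction K as [|k0 K IH]; intros ls c HN HK Hs; simpl.
  - destruct ls as [|p ls]; simpl; auto. destruct (HK p (or_introl eq_refl)).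
  - rewrite (Psplit (fun x => Nat.eqb (code x) k0) ls) with (c := c).
    2:{ intros p q Hp Hq E. rewrite (Hs p q Hp Hq E). auto. }
    inversion HN; subst.
    rewrite (IH (filter (fun p => negb (code (fst p) =? k0)%nat) ls) c); auto.
    + f_equal. apply sumL_ext. intros k Hk. f_equal.
      apply filter_nested. intros ->; auto.
    + intros p Hp. apply filter_In in Hp as [Hp Hn].
      destruct (HK p Hp) as [E|E]; auto. rewrite E, Nat.eqb_refl in Hn; discriminate.
    + intros p q Hp Hq; apply filter_In in Hp; apply filter_In in Hq; apply Hs; tauto.
Qed.
End Classes.

Lemma drop1 post : forall c d l x, (forall j, j <> l -> c j = d j) -> d l = x ->
  costL c post <= costL d post + Rabs (c l - x).
Proof.
  induction post as [|[y l'] t IH]; intros c d l x Hcd Hdl; simpl.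
  - pose proof (Rabs_pos (c l - x)); lra.
  - destruct (Nat.eq_dec l' l) as [->|Hne].
    + assert (H1 : Rabs (c l - y) <= Rabs (d l - y) + Rabs (c l - x)).
      { rewrite Hdl. pose proof (Rabs_triang (x - y) (c l - x)).
        replace (x - y + (c l - x)) with (c l - y) in H by ring. lra. }
      assert (H2 : costL (move c l y) t <= costL (move d l y) t + Rabs (y - y)).
      { assert (HH := IH (move c l y) (move d l y) l y).
        rewrite (move_eq c) in HH. apply HH; [|apply move_eq].
        intros j Hj. rewrite !move_neq by auto. apply Hcd; auto. }
      replace (y - y) with 0 in H2 by ring. rewrite Rabs_R0 in H2. lra.
    + rewrite (Hcd l') by auto.
      assert (H2 : costL (move c l' y) t <= costL (move d l' y) t + Rabs (move c l' y l - x)).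
      { apply (IH _ _ l).
        - intros j Hj. destruct (Nat.eq_dec j l') as [->|Hne'].
          + rewrite !move_eq; auto.
          + rewrite !move_neq by auto. apply Hcd; auto.
        - rewrite move_neq by auto. auto. }
      rewrite move_neq in H2 by auto. lra.
Qed.

Lemma mono (P : R * nat -> bool) ls : forall c, costL c (filter P ls) <= costL c ls.
Proof.
  induction ls as [|[x l] t IH]; intros c; simpl; [lra|].
  destruct (P (x,l)); simpl.
  - pose proof (IH (move c l x)); lra.
  - pose proof (IH c).
    pose proof (drop1 t c (move c l x) l x).
    assert (costL c t <= costL (move c l x) t + Rabs (c l - x)).
    { apply H0. intros j Hj; rewrite move_neq; auto. apply move_eq. }
    lra.
Qed.

Definition pairn (k l : nat) : nat := Cantor.to_nat (k, l).

Lemma pairn_inj k l k' l' : pairn k l = pairn k' l' -> k = k' /\ l = l'.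
Proof.
  unfold pairn; intros H. apply (f_equal Cantor.of_nat) in H.
  rewrite !Cantor.cancel_of_to in H. inversion H; auto.
Qed.

Section Sep.
Variable code : R -> nat.
Variable Fam : R -> Prop.
Variables K0 delta : R.
Hypothesis Hdelta : 0 < delta <= 1.
Hypothesis HK0 : 0 <= K0.
Hypothesis Hsame : forall x y, Fam x -> Fam y -> code x = code y -> Rabs (y - x) <= K0 * Rabs x.
Hypothesis Hdiff : forall x y, Fam x -> Fam y -> code x <> code y -> delta * Rabs x <= Rabs (y - x).

Definition rc (p : R * nat) : R * nat := (fst p, pairn (code (fst p)) (snd p)).

Definition Kc := Rmax 1 K0 / delta.

Definition Inv (c c' : config) :=
  forall l, (forall k, c' (pairn k l) = 0 \/ (Fam (c' (pairn k l)) /\ code (c' (pairn k l)) = k)) /\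
            (c l = 0 \/ (Fam (c l) /\ c' (pairn (code (c l)) l) = c l)).

Lemma Kc_ge1 : 1 <= Kc /\ Rmax 1 K0 <= Kc.
Proof.
  unfold Kc. pose proof (Rmax_l 1 K0). split.
  - apply (Rle_trans _ (Rmax 1 K0)); auto.
    apply (Rmult_le_reg_r delta); [lra|]. unfold Rdiv. rewrite Rmult_assoc, Rinv_l by lra.
    nra.
  - apply (Rmult_le_reg_r delta); [lra|]. unfold Rdiv. rewrite Rmult_assoc, Rinv_l by lra.
    nra.
Qed.

Lemma sep_gen ls : forall c c', Inv c c' -> (forall p, In p ls -> Fam (fst p)) ->
  costL c' (map rc ls) <= Kc * costL c ls.
Proof.
  induction ls as [|[x l] t IH]; intros c c' HI HF; simpl; [lra|].
  assert (Fx : Fam x) by (apply (HF (x,l)); left; auto).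
  destruct Kc_ge1 as [HK1 HK2].
  pose proof (Rmax_l 1 K0) as Hm1. pose proof (Rmax_r 1 K0) as Hm2.
  set (q := c' (pairn (code x) l)).
  assert (Hq : Rabs (q - x) <= Rmax 1 K0 * Rabs x).
  { unfold q. destruct (proj1 (HI l) (code x)) as [E|[Fq Cq]].
    - rewrite E. replace (0 - x) with (- x) by ring. rewrite Rabs_Ropp.
      pose proof (Rabs_pos x); nra.
    - pose proof (Hsame x _ Fx Fq (eq_sym Cq)).
      pose proof (Rabs_pos x); nra. }
  assert (Hstep : Rabs (q - x) <= Kc * Rabs (c l - x)).
  { destruct (proj2 (HI l)) as [E|[Fc Cc]].
    - rewrite E. replace (0 - x) with (- x) by ring. rewrite Rabs_Ropp.
      pose proof (Rabs_pos x); nra.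
    - destruct (Nat.eq_dec (code (c l)) (code x)) as [E|E].
      + unfold q. rewrite <- E, Cc. pose proof (Rabs_pos (c l - x)); nra.
      + assert (Hd : delta * Rabs x <= Rabs (c l - x)) by (apply Hdiff; auto).
        assert (Rmax 1 K0 * Rabs x <= Kc * Rabs (c l - x)).
        { unfold Kc. unfold Rdiv. 
          replace (Rmax 1 K0 * Rabs x) with (Rmax 1 K0 * / delta * (delta * Rabs x)) by (field; lra).
          apply Rmult_le_compat_l; auto. 
          apply Rmult_le_pos; [lra|]. left; apply Rinv_0_lt_compat; lra. }
        lra. }
  assert (HI' : Inv (move c l x) (move c' (pairn (code x) l) x)).
  { intros l'. split.
    - intros k. destruct (Nat.eq_dec (pairn k l') (pairn (code x) l)) as [E|E].
      + rewrite E, move_eq. right. apply pairn_inj in E as [-> ->]. auto.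
      + rewrite move_neq by auto. apply (proj1 (HI l')).
    - destruct (Nat.eq_dec l' l) as [->|E].
      + rewrite move_eq. right. split; auto. apply move_eq.
      + rewrite move_neq by auto. destruct (proj2 (HI l')) as [E'|[Fc Cc]]; [left; auto|right].
        split; auto. rewrite move_neq; auto. intros E2. apply pairn_inj in E2. tauto. }
  pose proof (IH _ _ HI' (fun p Hp => HF p (or_intror Hp))).
  simpl in *. fold q. lra.
Qed.

Lemma sep ls : (forall p, In p ls -> Fam (fst p)) ->
  costL (init_config 0) (map rc ls) <= Kc * costL (init_config 0) ls.
Proof.
  intros HF. apply sep_gen; auto. intros l; split; [intros k|]; left; reflexivity.
Qed.
End Sep.

Section Geo.
Variables a b : R.
Hypothesis Hab : 0 < a < b.

Definition rr := b / a.
Definition pw (k : Z) : R := a * exp (IZR k * ln rr).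
Definition sc (t : R) : Z := (up (ln (t / a) / ln rr) - 1)%Z.
Definition zn (k : Z) : nat := Cantor.to_nat (Z.to_nat k, Z.to_nat (- k)).
Definition code (x : R) : nat :=
  if Rlt_dec 0 x then S (2 * zn (sc (Rabs x)))
  else if Rlt_dec x 0 then S (S (2 * zn (sc (Rabs x)))) else O.
Definition lam (x : R) : R := (if Rlt_dec 0 x then 1 else -1) * pw (sc (Rabs x)) / a.

Lemma rr_gt1 : 1 < rr.
Proof. unfold rr. apply (Rmult_lt_reg_r a); [lra|]. unfold Rdiv. rewrite Rmult_assoc, Rinv_l; lra. Qed.

Lemma lnr_pos : 0 < ln rr.
Proof. rewrite <- ln_1. apply ln_increasing; pose proof rr_gt1; lra. Qed.

Lemma pw_pos k : 0 < pw k.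
Proof. unfold pw. pose proof (exp_pos (IZR k * ln rr)). nra. Qed.

Lemma pw_succ k : pw (k + 1) = rr * pw k.
Proof.
  unfold pw. rewrite plus_IZR. replace ((IZR k + 1) * ln rr) with (IZR k * ln rr + ln rr) by ring.
  rewrite exp_plus, exp_ln by (pose proof rr_gt1; lra). ring.
Qed.

Lemma pw_mono k k' : (k <= k')%Z -> pw k <= pw k'.
Proof.
  intros H. unfold pw. apply Rmult_le_compat_l; [lra|].
  destruct (Z.eq_dec k k') as [->|Hne]; [lra|].
  left. apply exp_increasing. apply Rmult_lt_compat_r; [apply lnr_pos|]. apply IZR_lt. lia.
Qed.

Lemma sc_spec t : 0 < t -> pw (sc t) <= t < pw (sc t + 1).
Proof.
  intros Ht. unfold sc.
  set (u := ln (t / a) / ln rr).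
  destruct (archimed u) as [H1 H2].
  assert (Hu : u * ln rr = ln (t / a)).
  { unfold u. field. pose proof lnr_pos; lra. }
  assert (Hta : 0 < t / a) by (apply Rdiv_lt_0_compat; lra).
  pose proof lnr_pos.
  replace (up u - 1 + 1)%Z with (up u) by ring.
  unfold pw. rewrite minus_IZR. split.
  - assert (E : exp ((IZR (up u) - 1) * ln rr) <= t / a).
    { rewrite <- (exp_ln (t/a)) by auto. rewrite <- Hu.
      destruct (Req_dec ((IZR (up u) - 1)) u) as [E|E].
      + rewrite E; lra.
      + left; apply exp_increasing. apply Rmult_lt_compat_r; auto. lra. }
    apply (Rmult_le_compat_l a) in E; [|lra]. 
    replace (a * (t / a)) with t in E by (field; lra). auto.
  - assert (E : t / a < exp (IZR (up u) * ln rr)).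
    { rewrite <- (exp_ln (t/a)) by auto. rewrite <- Hu.
      apply exp_increasing. apply Rmult_lt_compat_r; auto. }
    apply (Rmult_lt_compat_l a) in E; [|lra].
    replace (a * (t / a)) with t in E by (field; lra). auto.
Qed.

Lemma zn_inj k k' : zn k = zn k' -> k = k'.
Proof.
  unfold zn; intros H. apply (f_equal Cantor.of_nat) in H.
  rewrite !Cantor.cancel_of_to in H. inversion H. lia.
Qed.

Lemma code_inv x y : code x = code y ->
  (0 < x <-> 0 < y) /\ (x < 0 <-> y < 0) /\ sc (Rabs x) = sc (Rabs y).
Proof.
  unfold code. intros H.
  destruct (Rlt_dec 0 x); destruct (Rlt_dec 0 y);
  try destruct (Rlt_dec x 0); try destruct (Rlt_dec y 0); try lia;
  try (assert (x = 0) by lra); try (assert (y = 0) by lra); subst;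
  repeat split; try lra; auto;
  try (apply zn_inj; lia).
Qed.

Lemma code_0 : code 0 = O.
Proof. unfold code. destruct (Rlt_dec 0 0); [lra|]. destruct (Rlt_dec 0 0); [lra|]. auto. Qed.

Lemma code_0_inv y : code y = O -> y = 0.
Proof.
  unfold code. destruct (Rlt_dec 0 y); [lia|]. destruct (Rlt_dec y 0); [lia|]. lra.
Qed.

Lemma abs_diff_same x y : (0 < x <-> 0 < y) -> (x < 0 <-> y < 0) ->
  Rabs (y - x) = Rabs (Rabs y - Rabs x).
Proof.
  intros H1 H2. destruct (Rlt_dec 0 x).
  - assert (0 < y) by tauto. rewrite (Rabs_right x), (Rabs_right y) by lra. auto.
  - destruct (Rlt_dec x 0).
    + assert (y < 0) by tauto. rewrite (Rabs_left x), (Rabs_left y) by lra.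
      replace (- y - - x) with (- (y - x)) by ring. rewrite Rabs_Ropp; auto.
    + assert (x = 0) by lra. assert (y = 0).
      { destruct (Rlt_dec 0 y); [tauto|]. destruct (Rlt_dec y 0); [tauto|lra]. }
      subst. rewrite Rabs_R0. auto.
Qed.

Lemma G1 x y : code x = code y -> Rabs (y - x) <= (rr - 1) * Rabs x.
Proof.
  intros H. destruct (code_inv x y H) as [H1 [H2 H3]].
  rewrite (abs_diff_same x y H1 H2).
  pose proof rr_gt1.
  destruct (Req_dec x 0) as [->|Hx].
  - assert (y = 0).
    { destruct (Rlt_dec 0 y); [lra|]. destruct (Rlt_dec y 0); [lra|lra]. }
    subst. rewrite Rabs_R0. replace (0 - 0) with 0 by ring. rewrite Rabs_R0; lra.
  - assert (Hy : y <> 0) by (intros ->; destruct (Rlt_dec 0 x); [lra|]; destruct (Rlt_dec x 0); [lra|lra]).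
    pose proof (sc_spec (Rabs x) (Rabs_pos_lt x Hx)) as [A1 A2].
    pose proof (sc_spec (Rabs y) (Rabs_pos_lt y Hy)) as [B1 B2].
    rewrite H3 in A1, A2. rewrite pw_succ in A2, B2.
    pose proof (pw_pos (sc (Rabs y))).
    apply Rabs_le. split; nra.
Qed.

Definition delta := (rr - 1) / rr.

Lemma delta_spec : 0 < delta <= 1 /\ delta <= rr - 1.
Proof.
  pose proof rr_gt1. unfold delta. split; [split|].
  - apply Rdiv_lt_0_compat; lra.
  - apply (Rmult_le_reg_r rr); [lra|]. unfold Rdiv. rewrite Rmult_assoc, Rinv_l; lra.
  - apply (Rmult_le_reg_r rr); [lra|]. unfold Rdiv. rewrite Rmult_assoc, Rinv_l; nra.
Qed.

Lemma even_gap k k' : k <> k' -> Z.even k = Z.even k' -> (k' >= k + 2 \/ k' <= k - 2)%Z.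
Proof.
  intros Hne He.
  destruct (Z.eq_dec k' (k + 1)) as [E|E].
  - subst. rewrite Z.even_add in He. simpl in He. destruct (Z.even k); discriminate.
  - destruct (Z.eq_dec k' (k - 1)) as [E'|E'].
    + subst. rewrite Z.even_sub in He. simpl in He. destruct (Z.even k); discriminate.
    + lia.
Qed.

Lemma G2 x y : x <> 0 -> y <> 0 -> Z.even (sc (Rabs x)) = Z.even (sc (Rabs y)) ->
  code x <> code y -> delta * Rabs x <= Rabs (y - x).
Proof.
  intros Hx Hy He Hc. destruct delta_spec as [[D1 D2] D3].
  pose proof rr_gt1.
  pose proof (Rabs_pos_lt x Hx).
  assert (Hsign : (0 < x <-> 0 < y) /\ (x < 0 <-> y < 0) \/ Rabs x <= Rabs (y - x)).
  { destruct (Rlt_dec 0 x); destruct (Rlt_dec 0 y).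
    - left; split; split; intros; lra.
    - right. rewrite (Rabs_right x) by lra. rewrite Rabs_left1 by lra. lra.
    - right. rewrite (Rabs_left1 x) by lra. rewrite Rabs_right by lra. lra.
    - left; split; split; intros; lra. }
  destruct Hsign as [[S1 S2]|S].
  2:{ nra. }
  rewrite (abs_diff_same x y S1 S2).
  assert (Hk : sc (Rabs x) <> sc (Rabs y)).
  { intros E. apply Hc. unfold code.
    destruct (Rlt_dec 0 x); destruct (Rlt_dec 0 y); try (exfalso; tauto);
    try destruct (Rlt_dec x 0); try destruct (Rlt_dec y 0); try (exfalso; tauto); try lra;
    rewrite E; auto. }
  pose proof (sc_spec (Rabs x) (Rabs_pos_lt x Hx)) as [A1 A2].
  pose proof (sc_spec (Rabs y) (Rabs_pos_lt y Hy)) as [B1 B2].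
  destruct (even_gap _ _ Hk He) as [G|G].
  - pose proof (pw_mono (sc (Rabs x) + 1 + 1) (sc (Rabs y)) ltac:(lia)).
    rewrite pw_succ in H1.
    assert (rr * Rabs x <= rr * pw (sc (Rabs x) + 1)) by (apply Rmult_le_compat_l; lra).
    assert (rr * Rabs x <= Rabs y) by lra.
    assert (delta * Rabs x <= (rr - 1) * Rabs x) by (apply Rmult_le_compat_r; lra).
    assert (0 <= delta * Rabs x) by (apply Rmult_le_pos; lra).
    rewrite (Rabs_right (Rabs y - Rabs x)); lra.
  - pose proof (pw_mono (sc (Rabs y) + 1) (sc (Rabs x) - 1) ltac:(lia)).
    assert (E : pw (sc (Rabs x)) = rr * pw (sc (Rabs x) - 1)).
    { rewrite <- pw_succ. f_equal; ring. }
    assert (Rabs y * rr <= Rabs x) by nra.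
    assert (Rabs y <= Rabs x / rr).
    { apply (Rmult_le_reg_r rr); [lra|]. unfold Rdiv; rewrite Rmult_assoc, Rinv_l; lra. }
    rewrite (Rabs_left1 (Rabs y - Rabs x)).
    + unfold delta. unfold delta in *. 
      assert (Rabs x - Rabs x / rr = (rr - 1) / rr * Rabs x) by (field; lra). lra.
    + assert (Rabs x / rr < Rabs x).
      { apply (Rmult_lt_reg_r rr); [lra|]. unfold Rdiv; rewrite Rmult_assoc, Rinv_l; nra. }
      lra.
Qed.

Lemma lam_code x y : code x = code y -> lam x = lam y.
Proof.
  intros H. destruct (code_inv x y H) as [H1 [H2 H3]]. unfold lam. rewrite H3.
  destruct (Rlt_dec 0 x); destruct (Rlt_dec 0 y); try tauto.
Qed.

Lemma lam_spec x : x <> 0 -> lam x <> 0 /\ a <= / lam x * x <= b.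
Proof.
  intros Hx. unfold lam.
  pose proof (sc_spec (Rabs x) (Rabs_pos_lt x Hx)) as [A1 A2].
  rewrite pw_succ in A2. unfold rr in A2.
  set (p := pw (sc (Rabs x))) in *.
  assert (Hp : 0 < p) by apply pw_pos.
  destruct (Rlt_dec 0 x).
  - rewrite Rabs_right in A1, A2 by lra.
    split. { apply Rmult_integral_contrapositive; split; [|apply Rinv_neq_0_compat]; lra. }
    replace (/ (1 * p / a) * x) with (a * x / p) by (field; lra).
    split.
    + apply (Rmult_le_reg_r p); auto. unfold Rdiv. rewrite Rmult_assoc, Rinv_l by lra. nra.
    + apply (Rmult_le_reg_r p); auto. unfold Rdiv. rewrite Rmult_assoc, Rinv_l by lra.
      replace (b / a * p) with (b * p / a) in A2 by (field; lra).
      assert (a * x < b * p).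
      { apply (Rmult_lt_reg_r (/ a)). apply Rinv_0_lt_compat; lra.
        replace (a * x * / a) with x by (field; lra). auto. }
      lra.
  - rewrite Rabs_left in A1, A2 by lra.
    split. { apply Rmult_integral_contrapositive; split; [|apply Rinv_neq_0_compat]; lra. }
    replace (/ (-1 * p / a) * x) with (a * (- x) / p) by (field; lra).
    split.
    + apply (Rmult_le_reg_r p); auto. unfold Rdiv. rewrite Rmult_assoc, Rinv_l by lra. nra.
    + apply (Rmult_le_reg_r p); auto. unfold Rdiv. rewrite Rmult_assoc, Rinv_l by lra.
      replace (b / a * p) with (b * p / a) in A2 by (field; lra).
      assert (a * - x < b * p).
      { apply (Rmult_lt_reg_r (/ a)). apply Rinv_0_lt_compat; lra.
        replace (a * - x * / a) with (- x) by (field; lra). auto. }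
      lra.
Qed.
End Geo.

Lemma labels_In A hist sigma p : In p (labels A hist sigma) -> exists h, snd p = A h (fst p).
Proof.
  revert hist; induction sigma as [|r t IH]; intros hist H; simpl in H; [tauto|].
  destruct H as [<-|H]; [eexists; reflexivity|]. eapply IH; eauto.
Qed.

Lemma zero_cost ls : (forall p, In p ls -> fst p = 0) -> forall c, (forall j, c j = 0) -> costL c ls = 0.
Proof.
  induction ls as [|[x l] t IH]; intros H c Hc; simpl; auto.
  assert (Hx : x = 0) by (apply (H (x,l)); left; auto). subst x. rewrite Hc.
  rewrite IH; [| intros; apply H; right; auto |].
  - replace (0 - 0) with 0 by ring. rewrite Rabs_R0; ring.
  - intros j. destruct (Nat.eq_dec j l) as [->|E]; [rewrite move_eq | rewrite move_neq by auto]; auto.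
Qed.

Lemma labels_scaled A L hist sigma : L <> 0 ->
  labels (fun h y => A (map (fun z => / L * z) h) (/ L * y)) hist sigma =
  map (scaleP L) (labels A (map (fun z => / L * z) hist) (map (fun z => / L * z) sigma)).
Proof.
  intros HL. revert hist; induction sigma as [|r t IH]; intros hist; simpl; auto.
  f_equal.
  - unfold scaleP; simpl. f_equal. field; auto.
  - rewrite IH. rewrite map_app. reflexivity.
Qed.

Lemma map_fst_filter (f : R -> bool) (ls : list (R * nat)) :
  map fst (filter (fun p => f (fst p)) ls) = filter f (map fst ls).
Proof. induction ls as [|p ls IH]; simpl; auto. destruct (f (fst p)); simpl; rewrite IH; auto. Qed.

Lemma filter_map_fstpres (g : R * nat -> R * nat) (f : R -> bool) ls :
  (forall p, fst (g p) = fst p) ->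
  filter (fun p => f (fst p)) (map g ls) = map g (filter (fun p => f (fst p)) ls).
Proof.
  intros Hg. induction ls as [|p ls IH]; simpl; auto. rewrite Hg.
  destruct (f (fst p)); simpl; rewrite IH; auto.
Qed.

Section Main.
Variables a b : R.
Hypothesis Hab : 0 < a < b.

Definition Cr (A : rule) : rule := fun h x =>
  pairn (code a b x)
    (A (map (fun z => / lam a b x * z) (filter (fun z => Nat.eqb (code a b z) (code a b x)) h))
       (/ lam a b x * x)).

Lemma key_filter A x0 hist sigma :
  filter (clsf (code a b) (code a b x0)) (labels (Cr A) hist sigma) =
  map (relab (pairn (code a b x0)))
    (labels (fun h y => A (map (fun z => / lam a b x0 * z) h) (/ lam a b x0 * y))
       (filter (fun z => Nat.eqb (code a b z) (code a b x0)) hist)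
       (filter (fun z => Nat.eqb (code a b z) (code a b x0)) sigma)).
Proof.
  revert hist; induction sigma as [|r t IH]; intros hist; simpl; auto.
  unfold clsf at 1; simpl.
  destruct (Nat.eqb_spec (code a b r) (code a b x0)) as [E|E]; simpl.
  - f_equal.
    + unfold relab, Cr; simpl. rewrite E. rewrite (lam_code a b Hab r x0 E). reflexivity.
    + rewrite IH. rewrite filter_app. simpl. rewrite E, Nat.eqb_refl. reflexivity.
  - rewrite IH. rewrite filter_app. simpl.
    destruct (Nat.eqb_spec (code a b r) (code a b x0)); [contradiction|]. rewrite app_nil_r. auto.
Qed.

Variable A : rule.
Variables rho c : R.
Hypothesis HA : forall sigma, Forall (fun x : R => x = 0 \/ (a <= x <= b)) sigma ->
  ALG A 0 sigma <= rho * OPT 0 sigma + c.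

Definition rho' := Rmax rho 0 + Rmax c 0 / a.

Lemma rho'_ge0 : 0 <= rho'.
Proof.
  unfold rho'. pose proof (Rmax_r rho 0). pose proof (Rmax_r c 0).
  assert (0 <= Rmax c 0 / a) by (unfold Rdiv; apply Rmult_le_pos; [lra|left; apply Rinv_0_lt_compat; lra]). lra.
Qed.

Lemma class_bound sigma x0 : In x0 sigma ->
  costL (init_config 0) (filter (clsf (code a b) (code a b x0)) (labels (Cr A) nil sigma))
  <= rho' * OPT 0 (filter (fun z => Nat.eqb (code a b z) (code a b x0)) sigma).
Proof.
  intros Hin.
  set (sk := filter (fun z => Nat.eqb (code a b z) (code a b x0)) sigma).
  pose proof rho'_ge0. pose proof (OPT_ge0 0 sk).
  destruct (Req_dec x0 0) as [->|Hx0].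
  - rewrite zero_cost; [nra| |intros; reflexivity].
    intros p Hp. apply filter_In in Hp as [Hp Hc]. unfold clsf in Hc.
    apply Nat.eqb_eq in Hc. rewrite code_0 in Hc. apply (code_0_inv a b); auto.
  - set (L := lam a b x0).
    destruct (lam_spec a b Hab x0 Hx0) as [HL HLx]. fold L in HL, HLx.
    rewrite key_filter. simpl. fold L. fold sk.
    rewrite (costL_relab _ _ (fun i j E => proj2 (pairn_inj _ _ _ _ E)) _ (init_config 0)) by reflexivity.
    rewrite labels_scaled by auto. simpl.
    rewrite (costL_scale L _ (init_config 0)) by (intros; unfold init_config; ring).
    set (s' := map (fun z => / L * z) sk).
    fold (run_cost A nil (init_config 0) s') || rewrite <- run_cost_labels.
    change (run_cost A nil (init_config 0) s') with (ALG A 0 s').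
    assert (HF : Forall (fun x : R => x = 0 \/ (a <= x <= b)) s').
    { apply Forall_forall. intros z Hz. unfold s' in Hz. apply in_map_iff in Hz as [y [<- Hy]].
      unfold sk in Hy. apply filter_In in Hy as [_ Hy]. apply Nat.eqb_eq in Hy.
      right. assert (Hy0 : y <> 0).
      { intros ->. rewrite code_0 in Hy. apply Hx0. apply (code_0_inv a b); auto. }
      unfold L. rewrite <- (lam_code a b Hab y x0 Hy). apply (lam_spec a b Hab y Hy0). }
    assert (Hs'a : a <= OPT 0 s').
    { apply (Rle_trans _ (Rabs (/ L * x0))).
      - rewrite Rabs_right; lra.
      - apply OPT_ge_elem. unfold s'. apply in_map. unfold sk. apply filter_In. split; auto.
        apply Nat.eqb_refl. }
    assert (Hopt : Rabs L * OPT 0 s' <= OPT 0 sk).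
    { apply OPT_ge_costL. intros Ls HLs.
      pose proof (OPT_le_costL 0 (map (scaleP (/ L)) Ls)) as H1.
      rewrite (costL_scale (/ L) Ls (init_config 0)) in H1 by (intros; unfold init_config; ring).
      replace (map fst (map (scaleP (/ L)) Ls)) with s' in H1.
      2:{ unfold s'. rewrite <- HLs. rewrite !map_map. reflexivity. }
      rewrite Rabs_inv in H1.
      pose proof (Rabs_pos_lt L HL).
      apply (Rmult_le_compat_l (Rabs L)) in H1; [|lra].
      rewrite <- Rmult_assoc, Rinv_r, Rmult_1_l in H1 by lra. auto. }
    pose proof (HA s' HF) as H2.
    pose proof (OPT_ge0 0 s').
    pose proof (Rabs_pos_lt L HL).
    assert (H3x : ALG A 0 s' <= rho' * OPT 0 s').
    { unfold rho'. pose proof (Rmax_l rho 0). pose proof (Rmax_l c 0). pose proof (Rmax_r c 0).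
      assert (rho * OPT 0 s' <= Rmax rho 0 * OPT 0 s') by (apply Rmult_le_compat_r; lra).
      assert (Rmax c 0 <= Rmax c 0 / a * OPT 0 s').
      { replace (Rmax c 0 / a * OPT 0 s') with (Rmax c 0 * (OPT 0 s' / a)) by (field; lra).
        rewrite <- (Rmult_1_r (Rmax c 0)) at 1. apply Rmult_le_compat_l; [lra|].
        apply (Rmult_le_reg_r a); [lra|]. unfold Rdiv. rewrite Rmult_assoc, Rinv_l; lra. }
      lra. }
    apply (Rle_trans _ (Rabs L * (rho' * OPT 0 s'))).
    + apply Rmult_le_compat_l; lra.
    + replace (Rabs L * (rho' * OPT 0 s')) with (rho' * (Rabs L * OPT 0 s')) by ring.
      apply Rmult_le_compat_l; lra.
Qed.
End Main.

Section Opt.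
Variables a b : R.
Hypothesis Hab : 0 < a < b.

Let cd := code a b.
Let KK := Kc (rr a b - 1) (delta a b).

Lemma KK_ge1 : 1 <= KK.
Proof.
  destruct (delta_spec a b Hab) as [D1 D2]. pose proof (rr_gt1 a b Hab).
  unfold KK. apply (Kc_ge1 (rr a b - 1) (delta a b) D1).
Qed.

Lemma rc_fst p : fst (rc cd p) = fst p.
Proof. reflexivity. Qed.

Lemma labsep_rc {T : Type} ls (P : nat -> T) : forall p q, In p (map (rc cd) ls) -> In q (map (rc cd) ls) ->
  snd p = snd q -> P (cd (fst p)) = P (cd (fst q)).
Proof.
  intros p q Hp Hq E. apply in_map_iff in Hp as [p' [<- _]]. apply in_map_iff in Hq as [q' [<- _]].
  unfold rc in E; simpl in E. apply pairn_inj in E as [E _]. simpl. rewrite E; auto.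
Qed.

Lemma sep_fam (Fam : R -> Prop) ls :
  (forall x y, Fam x -> Fam y -> cd x <> cd y -> delta a b * Rabs x <= Rabs (y - x)) ->
  (forall p, In p ls -> Fam (fst p)) ->
  costL (init_config 0) (map (rc cd) ls) <= KK * costL (init_config 0) ls.
Proof.
  intros Hd HF. destruct (delta_spec a b Hab) as [D1 D2]. pose proof (rr_gt1 a b Hab).
  apply (sep cd Fam (rr a b - 1) (delta a b)); auto; try lra.
  intros x y _ _ E. apply (G1 a b Hab); auto.
Qed.

Lemma opt_sum sigma :
  sumL (fun k => OPT 0 (filter (fun z => Nat.eqb (cd z) k) sigma)) (nodup Nat.eq_dec (map cd sigma))
  <= 3 * KK * OPT 0 sigma.
Proof.
  pose proof KK_ge1.
  set (S := sumL _ _).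
  assert (S / (3 * KK) <= OPT 0 sigma).
  2:{ apply (Rmult_le_compat_l (3 * KK)) in H0; [|lra].
      replace (3 * KK * (S / (3 * KK))) with S in H0 by (field; lra). auto. }
  apply OPT_ge_costL. intros Ls HLs.
  apply (Rmult_le_reg_r (3 * KK)); [lra|].
  replace (S / (3 * KK) * (3 * KK)) with S by (field; lra).
  set (ci := init_config 0).
  assert (H1 : S <= costL ci (map (rc cd) Ls)).
  { rewrite (class_split cd (nodup Nat.eq_dec (map cd sigma)) (map (rc cd) Ls) ci).
    - apply sumL_le. intros k Hk.
      assert (E : filter (fun z => Nat.eqb (cd z) k) sigma = map fst (filter (clsf cd k) (map (rc cd) Ls))).
      { unfold clsf. rewrite (map_fst_filter (fun x => Nat.eqb (cd x) k)). rewrite map_map. simpl. rewrite <- HLs. reflexivity. }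
      rewrite E. apply OPT_le_costL.
    - apply NoDup_nodup.
    - intros p Hp. apply nodup_In. apply in_map_iff in Hp as [p' [<- Hp']].
      simpl. rewrite <- HLs. apply in_map. apply in_map; auto.
    - intros p q Hp Hq E. apply (labsep_rc Ls (fun n => n) p q Hp Hq E). }
  assert (Hcode : forall x y, cd x = cd y -> Z.even (sc a b (Rabs x)) = Z.even (sc a b (Rabs y))).
  { intros x y E. destruct (code_inv a b x y E) as [_ [_ E']]. rewrite E'; auto. }
  rewrite (Psplit (fun x => Nat.eqb (cd x) 0) (map (rc cd) Ls)) in H1.
  2:{ intros p q Hp Hq E. apply (labsep_rc Ls (fun n => Nat.eqb n 0) p q Hp Hq E). }
  set (L2 := filter (fun p => negb (Nat.eqb (cd (fst p)) 0)) (map (rc cd) Ls)) in H1.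
  rewrite (Psplit (fun x => Z.even (sc a b (Rabs x))) L2) in H1.
  2:{ intros p q Hp Hq E. unfold L2 in Hp, Hq. apply filter_In in Hp as [Hp _]. apply filter_In in Hq as [Hq _].
      apply Hcode. apply (labsep_rc Ls (fun n => n) p q Hp Hq E). }
  unfold L2 in H1.
  simpl in H1.
  rewrite (filter_map_fstpres (rc cd) (fun x => negb (Nat.eqb (cd x) 0))) in H1 by reflexivity.
  rewrite (filter_map_fstpres (rc cd) (fun x => Nat.eqb (cd x) 0)) in H1 by reflexivity.
  rewrite (filter_map_fstpres (rc cd) (fun x => Z.even (sc a b (Rabs x)))) in H1 by reflexivity.
  rewrite (filter_map_fstpres (rc cd) (fun x => negb (Z.even (sc a b (Rabs x))))) in H1 by reflexivity.
  pose proof (costL_ge0 Ls ci).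
  assert (Z1 : costL ci (map (rc cd) (filter (fun p => Nat.eqb (cd (fst p)) 0) Ls)) <= KK * costL ci Ls).
  { eapply Rle_trans.
    - apply (sep_fam (fun x => x = 0)).
      + intros x y -> -> E; congruence.
      + intros p Hp. apply filter_In in Hp as [_ Hp]. apply Nat.eqb_eq in Hp. apply (code_0_inv a b); auto.
    - apply Rmult_le_compat_l; [lra|]. apply mono. }
  assert (Z2 : costL ci (map (rc cd) (filter (fun p => Z.even (sc a b (Rabs (fst p))))
                 (filter (fun p => negb (Nat.eqb (cd (fst p)) 0)) Ls))) <= KK * costL ci Ls).
  { eapply Rle_trans.
    - apply (sep_fam (fun x => x <> 0 /\ Z.even (sc a b (Rabs x)) = true)).
      + intros x y [Hx Ex] [Hy Ey] E. apply (G2 a b Hab); auto. congruence.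
      + intros p Hp. apply filter_In in Hp as [Hp Ep]. apply filter_In in Hp as [_ Hp].
        split; auto. intros E. rewrite E in Hp. unfold cd in Hp. rewrite code_0 in Hp. discriminate.
    - apply Rmult_le_compat_l; [lra|]. eapply Rle_trans; apply mono. }
  assert (Z3 : costL ci (map (rc cd) (filter (fun p => negb (Z.even (sc a b (Rabs (fst p)))))
                 (filter (fun p => negb (Nat.eqb (cd (fst p)) 0)) Ls))) <= KK * costL ci Ls).
  { eapply Rle_trans.
    - apply (sep_fam (fun x => x <> 0 /\ Z.even (sc a b (Rabs x)) = false)).
      + intros x y [Hx Ex] [Hy Ey] E. apply (G2 a b Hab); auto. congruence.
      + intros p Hp. apply filter_In in Hp as [Hp Ep]. apply filter_In in Hp as [_ Hp].
        split.
        * intros E. rewrite E in Hp. unfold cd in Hp. rewrite code_0 in Hp. discriminate.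
        * destruct (Z.even _); auto; discriminate.
    - apply Rmult_le_compat_l; [lra|]. eapply Rle_trans; apply mono. }
  lra.
Qed.
End Opt.

Theorem corollary2 (a b : R) :
  0 < a < b ->
  (competitive (fun _ : R => True) 0 <->
   competitive (fun x : R => x = 0 \/ (a <= x <= b)) 0).
Proof.
  intros Hab. split.
  - intros [A [rho [c H]]]. exists A, rho, c. intros sigma HF. apply H.
    eapply Forall_impl; [|exact HF]. simpl; auto.
  - intros [A [rho [c H]]].
    set (KK := Kc (rr a b - 1) (delta a b)).
    exists (Cr a b A), (rho' a rho c * (3 * KK)), 0. intros sigma _.
    unfold ALG. rewrite run_cost_labels.
    rewrite (class_split (code a b) (nodup Nat.eq_dec (map (code a b) sigma)) (labels (Cr a b A) nil sigma) (init_config 0)).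
    + eapply Rle_trans.
      * apply sumL_le with (g := fun k => rho' a rho c * OPT 0 (filter (fun z => Nat.eqb (code a b z) k) sigma)).
        intros k Hk. apply nodup_In, in_map_iff in Hk as [x0 [<- Hx0]].
        apply (class_bound a b Hab A rho c H); auto.
      * rewrite sumL_scal. pose proof (opt_sum a b Hab sigma) as Ho. fold KK in Ho.
        pose proof (rho'_ge0 a b Hab rho c).
        apply (Rmult_le_compat_l (rho' a rho c)) in Ho; [|auto]. lra.
    + apply NoDup_nodup.
    + intros p Hp. apply nodup_In. apply in_map.
      rewrite <- (labels_fst (Cr a b A) nil sigma). apply in_map; auto.
    + intros p q Hp Hq E.
      destruct (labels_In _ _ _ _ Hp) as [h1 E1]. destruct (labels_In _ _ _ _ Hq) as [h2 E2].
      rewrite E1, E2 in E. unfold Cr in E. apply pairn_inj in E. tauto.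
Qed.
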